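(* Let $\Gamma=(V_\Gamma,E_\Gamma)$ be a simple triangular grid graph, let $u,v\in V_\Gamma$, and let $\mathcal U_{uv}\subseteq V_\Gamma$ be the set of all nodes that lie on at least one shortest $uv$-path in $\Gamma$. Then $\mathcal U_{uv}$ is geodesically convex in $\Gamma$: for all $x,y\in\mathcal U_{uv}$, every shortest $xy$-path in $\Gamma$ consists entirely of nodes of $\mathcal U_{uv}$.
   Context: $G_\Delta=(V_\Delta,E_\Delta)$ is the infinite regular triangular grid graph. A triangular grid graph is the subgraph $\Gamma$ of $G_\Delta$ induced by a finite node set $V_\Gamma\subseteq V_\Delta$ such that $\Gamma$ is connected. The holes of $\Gamma$ are the connected components of the subgraph of $G_\Delta$ induced by $V_\Delta\setminus V_\Gamma$; exactly one is unbounded (the outer hole), the others are inner holes. $\Gamma$ is simple if it has no inner holes. Paths are sequences of nodes with consecutive nodes adjacent in $\Gamma$; the length of a path is its number of edges, and $d_\Gamma$ denotes the shortest-path distance in $\Gamma$. *)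

(* Defs.v *)
From Stdlib Require Import ZArith List.
Import ListNotations.
Open Scope Z_scope.

(* Nodes of the infinite regular triangular grid G_Delta, in axial
   coordinates: node (a,b) is adjacent to its six neighbours
   (a+-1,b), (a,b+-1), (a+1,b-1), (a-1,b+1). *)
Definition node := (Z * Z)%type.

Definition tri_adj (p q : node) : Prop :=
  let dx := fst q - fst p in
  let dy := snd q - snd p in
  (dx = 1 /\ dy = 0) \/ (dx = -1 /\ dy = 0) \/
  (dx = 0 /\ dy = 1) \/ (dx = 0 /\ dy = -1) \/
  (dx = 1 /\ dy = -1) \/ (dx = -1 /\ dy = 1).

(* gpath S x l z : x :: l is a path from x to z in the subgraph of G_Delta
   induced by the node set S; its length (number of edges) is length l. *)
Inductive gpath (S : node -> Prop) : node -> list node -> node -> Prop :=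
| gp_nil x : S x -> gpath S x [] x
| gp_cons x y l z : S x -> tri_adj x y -> gpath S y l z -> gpath S x (y :: l) z.

Definition shortest_path (S : node -> Prop) (x : node) (l : list node) (z : node) : Prop :=
  gpath S x l z /\ forall l', gpath S x l' z -> (length l <= length l')%nat.

Definition connected_set (S : node -> Prop) : Prop :=
  forall x y, S x -> S y -> exists l, gpath S x l y.

Definition tri_grid_graph (vs : list node) : Prop :=
  connected_set (fun x => In x vs).

(* Simple: no inner holes, i.e. the complement V_Delta \ V_Gamma induces a
   connected subgraph of G_Delta (it consists of the outer hole only). *)
Definition simple_grid (vs : list node) : Prop :=
  connected_set (fun x => ~ In x vs).

Definition on_shortest (vs : list node) (u v : node) (x : node) : Prop :=
  exists l, shortest_path (fun z => In z vs) u l v /\ In x (u :: l).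

(* Main.v *)
Require Import Defs.
From Stdlib Require Import ZArith List Lia ClassicalEpsilon Classical.
Import ListNotations.
Open Scope Z_scope.

Lemma gpath_mono (P Q : node -> Prop) x l y :
  (forall z, P z -> Q z) -> gpath P x l y -> gpath Q x l y.
Proof. intros H G; induction G; constructor; auto. Qed.

Lemma gpath_map (h : node -> node) (P Q : node -> Prop) x l y :
  (forall p q, tri_adj p q -> tri_adj (h p) (h q)) ->
  (forall z, P z -> Q (h z)) -> gpath P x l y -> gpath Q (h x) (map h l) (h y).
Proof. intros H1 H2 G; induction G; simpl; constructor; auto. Qed.

Lemma gpath_app P x l1 m l2 y :
  gpath P x l1 m -> gpath P m l2 y -> gpath P x (l1 ++ l2) y.
Proof. intros G; induction G; simpl; auto. intros; constructor; auto. Qed.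

Lemma gpath_ends P x l y : gpath P x l y -> P x /\ P y.
Proof. intros G; induction G; intuition. Qed.

Lemma last_cons (y x : node) l : last (y :: l) x = last l y.
Proof. revert y; induction l; intros y; simpl; auto. simpl in IHl.
  destruct l as [|n l]; auto. Qed.

Lemma gpath_last P x l y : gpath P x l y -> last l x = y.
Proof. intros G; induction G; auto. rewrite last_cons; auto. Qed.

Lemma gpath_split P x l y z :
  gpath P x l y -> In z (x :: l) ->
  exists l1 l2, l = l1 ++ l2 /\ gpath P x l1 z /\ gpath P z l2 y.
Proof.
  intros G; induction G; intros Hz.
  - destruct Hz as [<-|[]]. exists [], []. repeat split; constructor; auto.
  - destruct Hz as [<-|Hz].
    + exists [], (y :: l). repeat split; auto. constructor; auto. constructor; auto.
    + destruct (IHG Hz) as (l1 & l2 & -> & G1 & G2).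
      exists (y :: l1), l2. repeat split; auto. constructor; auto.
Qed.

Lemma gpath_in_last P x l y : gpath P x l y -> In y (x :: l).
Proof. intros G; induction G; simpl in *; tauto. Qed.

Lemma shortest_exists P x y :
  (exists l, gpath P x l y) -> exists l, shortest_path P x l y.
Proof.
  intros [l G].
  assert (H : forall n l, (length l <= n)%nat -> gpath P x l y -> exists l, shortest_path P x l y).
  { induction n; intros l0 Hn G0.
    - exists l0; split; auto. intros; lia.
    - destruct (classic (forall l', gpath P x l' y -> (length l0 <= length l')%nat)) as [Hc|Hc].
      + exists l0; split; auto.
      + apply not_all_ex_not in Hc as [l' Hl']. 
        apply imply_to_and in Hl' as [G' Hlt].
        apply (IHn l'); auto. lia. }
  apply (H (length l) l); auto.
Qed.

Lemma shortest_mono (P Q : node -> Prop) x l y :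
  (forall z, P z <-> Q z) -> shortest_path P x l y -> shortest_path Q x l y.
Proof.
  intros H [G M]; split.
  - eapply gpath_mono; [|eauto]. firstorder.
  - intros l' G'. apply M. eapply gpath_mono; [|eauto]. firstorder.
Qed.

Lemma shortest_tail P x y1 l y :
  shortest_path P x (y1 :: l) y -> shortest_path P y1 l y.
Proof.
  intros [G M]. inversion G; subst. split; auto.
  intros l' G'. assert (length (y1 :: l) <= length (y1 :: l'))%nat.
  { apply M. constructor; auto. } simpl in *; lia.
Qed.

Ltac dadj H :=
  unfold tri_adj in H; cbn [fst snd] in H;
  repeat match type of H with _ \/ _ => destruct H as [H|H] end;
  destruct H.

Ltac zdestr :=
  repeat match goal with
  | |- context [Z.eqb ?a ?b] => destruct (Z.eqb_spec a b)
  | |- context [Z.leb ?a ?b] => destruct (Z.leb_spec a b)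
  | |- context [Z.ltb ?a ?b] => destruct (Z.ltb_spec a b)
  | H : context [Z.eqb ?a ?b] |- _ => destruct (Z.eqb_spec a b)
  | H : context [Z.leb ?a ?b] |- _ => destruct (Z.leb_spec a b)
  | H : context [Z.ltb ?a ?b] |- _ => destruct (Z.ltb_spec a b)
  end; cbv beta iota delta [andb orb negb] in *.

Definition dT (p q : node) : Z :=
  let da := fst q - fst p in let db := snd q - snd p in
  Z.max (Z.abs da) (Z.max (Z.abs db) (Z.abs (da + db))).

Definition cross0 (p q : node) : option (Z * Z) :=
  if Z.eqb (snd q) (snd p + 1) then Some (snd p, fst p + fst q)
  else if Z.eqb (snd p) (snd q + 1) then Some (snd q, fst p + fst q) else None.

Definition lowerE (b s : Z) (p : node) := snd p = b /\ 2 * fst p - 1 <= s <= 2 * fst p.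
Definition upperE (b s : Z) (p : node) := snd p = b + 1 /\ 2 * fst p <= s <= 2 * fst p + 1.

Definition Eb (f : node -> bool) (b s : Z) : bool := f ((s + 1) / 2, b) && f (s / 2, b + 1).

Lemma cross0_ends p q b s : tri_adj p q -> cross0 p q = Some (b, s) ->
  (lowerE b s p /\ upperE b s q) \/ (upperE b s p /\ lowerE b s q).
Proof.
  destruct p as [p1 p2], q as [q1 q2]; intros H Hc; unfold cross0 in Hc; cbn [fst snd] in *.
  unfold lowerE, upperE; cbn [fst snd]. dadj H; zdestr; try discriminate;
  injection Hc; intros; subst; lia.
Qed.

Lemma lowerE_eq b s p : lowerE b s p -> p = ((s + 1) / 2, b).
Proof. destruct p as [p1 p2]; unfold lowerE; cbn [fst snd]; intros [-> H].
  f_equal. Z.div_mod_to_equations. lia. Qed.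

Lemma upperE_eq b s p : upperE b s p -> p = (s / 2, b + 1).
Proof. destruct p as [p1 p2]; unfold upperE; cbn [fst snd]; intros [-> H].
  f_equal. Z.div_mod_to_equations. lia. Qed.

Lemma Eb_true f p q b s : f p = true -> f q = true -> tri_adj p q ->
  cross0 p q = Some (b, s) -> Eb f b s = true.
Proof.
  intros Hp Hq H Hc. unfold Eb.
  destruct (cross0_ends _ _ _ _ H Hc) as [[H1 H2]|[H1 H2]].
  - rewrite <- (lowerE_eq _ _ _ H1), <- (upperE_eq _ _ _ H2), Hp, Hq; auto.
  - rewrite <- (lowerE_eq _ _ _ H2), <- (upperE_eq _ _ _ H1), Hp, Hq; auto.
Qed.

Lemma Eb_false f b s : Eb f b s = false ->
  exists m, f m = false /\ (lowerE b s m \/ upperE b s m).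
Proof.
  unfold Eb. intros H. apply Bool.andb_false_iff in H as [H|H].
  - exists ((s+1)/2, b). split; auto. left. unfold lowerE; cbn [fst snd]. split; auto.
    Z.div_mod_to_equations. lia.
  - exists (s/2, b+1). split; auto. right. unfold upperE; cbn [fst snd]. split; auto.
    Z.div_mod_to_equations. lia.
Qed.

Lemma dT_adj p q y : tri_adj p q -> dT p y <= 1 + dT q y.
Proof. destruct p, q, y; intros H; unfold dT; cbn [fst snd]; dadj H; lia. Qed.

Lemma dT_lb P x l y : gpath P x l y -> dT x y <= Z.of_nat (length l).
Proof.
  intros G; induction G.
  - unfold dT; lia.
  - simpl length. pose proof (dT_adj x y z H0). lia.
Qed.

Lemma geom b s s' x y1 q1 q0 :
  ((lowerE b s x /\ upperE b s y1) \/ (upperE b s x /\ lowerE b s y1)) ->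
  ((lowerE b s' q1 /\ upperE b s' q0) \/ (upperE b s' q1 /\ lowerE b s' q0)) ->
  dT x q0 <= dT y1 q1 + 1.
Proof.
  destruct x, y1, q1, q0; unfold lowerE, upperE, dT; cbn [fst snd]; intros H1 H2; lia.
Qed.

Lemma rowpath (f : node -> bool) r : forall n a a', Z.abs (a' - a) = Z.of_nat n ->
  (forall c, Z.min a a' <= c <= Z.max a a' -> f (c, r) = true) ->
  exists L, gpath (fun z => f z = true) (a, r) L (a', r) /\ length L = n.
Proof.
  induction n; intros a a' Hn Hc.
  - assert (a = a') by lia. subst. exists []. split; auto. constructor. apply Hc; lia.
  - destruct (Z_lt_ge_dec a a') as [Hl|Hl].
    + destruct (IHn (a+1) a') as (L & G & HL); try lia.
      { intros c Hc'. apply Hc; lia. }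
      exists ((a+1, r) :: L). split; [|simpl; lia]. constructor; auto.
      apply Hc; lia. unfold tri_adj; cbn [fst snd]; lia.
    + destruct (IHn (a-1) a') as (L & G & HL); try lia.
      { intros c Hc'. apply Hc; lia. }
      exists ((a-1, r) :: L). split; [|simpl; lia]. constructor; auto.
      apply Hc; lia. unfold tri_adj; cbn [fst snd]; lia.
Qed.

Lemma ladder f b s s' p q :
  (forall u, Z.min s s' <= u <= Z.max s s' -> Eb f b u = true) ->
  (lowerE b s p \/ upperE b s p) -> (lowerE b s' q \/ upperE b s' q) ->
  exists L, gpath (fun z => f z = true) p L q /\ Z.of_nat (length L) <= dT p q.
Proof.
  intros HE Hp Hq.
  assert (Hlow : forall c, Z.min s s' <= 2*c -> 2*c - 1 <= Z.max s s' -> f (c, b) = true).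
  { intros c H1 H2. pose proof (HE (Z.max (Z.min s s') (2*c-1)) ltac:(lia)) as H.
    unfold Eb in H. apply andb_prop in H as [H _].
    replace ((Z.max (Z.min s s') (2 * c - 1) + 1) / 2) with c in H; auto.
    Z.div_mod_to_equations; lia. }
  assert (Hup : forall c, Z.min s s' <= 2*c+1 -> 2*c <= Z.max s s' -> f (c, b+1) = true).
  { intros c H1 H2. pose proof (HE (Z.max (Z.min s s') (2*c)) ltac:(lia)) as H.
    unfold Eb in H. apply andb_prop in H as [_ H].
    replace (Z.max (Z.min s s') (2 * c) / 2) with c in H; auto.
    Z.div_mod_to_equations; lia. }
  destruct p as [p1 p2], q as [q1 q2]. unfold lowerE, upperE, dT in *; cbn [fst snd] in *.
  destruct Hp as [[-> Hp]|[-> Hp]], Hq as [[-> Hq]|[-> Hq]].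
  - destruct (rowpath f b (Z.to_nat (Z.abs (q1 - p1))) p1 q1) as (L & G & HL).
    + lia.
    + intros c Hc; apply Hlow; lia.
    + exists L; split; auto. lia.
  - destruct (Z_le_gt_dec p1 q1).
    + destruct (rowpath f (b+1) (Z.to_nat (q1 - p1)) p1 q1) as (L & G & HL).
      * lia.
      * intros c Hc; apply Hup; lia.
      * exists ((p1, b+1) :: L); split; [|simpl; lia].
        constructor; auto. apply Hlow; lia. unfold tri_adj; cbn [fst snd]; lia.
    + destruct (rowpath f (b+1) (Z.to_nat (p1 - 1 - q1)) (p1 - 1) q1) as (L & G & HL).
      * lia.
      * intros c Hc; apply Hup; lia.
      * exists ((p1 - 1, b+1) :: L); split; [|simpl; lia].
        constructor; auto. apply Hlow; lia. unfold tri_adj; cbn [fst snd]; lia.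
  - destruct (Z_le_gt_dec q1 p1).
    + destruct (rowpath f b (Z.to_nat (p1 - q1)) p1 q1) as (L & G & HL).
      * lia.
      * intros c Hc; apply Hlow; lia.
      * exists ((p1, b) :: L); split; [|simpl; lia].
        constructor; auto. apply Hup; lia. unfold tri_adj; cbn [fst snd]; lia.
    + destruct (rowpath f b (Z.to_nat (q1 - p1 - 1)) (p1 + 1) q1) as (L & G & HL).
      * lia.
      * intros c Hc; apply Hlow; lia.
      * exists ((p1 + 1, b) :: L); split; [|simpl; lia].
        constructor; auto. apply Hup; lia. unfold tri_adj; cbn [fst snd]; lia.
  - destruct (rowpath f (b+1) (Z.to_nat (Z.abs (q1 - p1))) p1 q1) as (L & G & HL).
    + lia.
    + intros c Hc; apply Hup; lia.
    + exists L; split; auto. lia.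
Qed.

Definition bounded (f : node -> bool) := exists B, forall z, f z = true ->
  Z.abs (fst z) <= B /\ Z.abs (snd z) <= B.

Definition lspec f b s r := Eb f b r = false /\ r < s /\ forall u, r < u < s -> Eb f b u = true.
Definition sL f b s := epsilon (inhabits 0) (lspec f b s).
Definition ids0step f p q : list (Z * Z) :=
  match cross0 p q with Some (b, s) => [(b, sL f b s)] | None => [] end.
Fixpoint ids0 f (x : node) (l : list node) : list (Z * Z) :=
  match l with [] => [] | y :: l' => ids0step f x y ++ ids0 f y l' end.

Definition zz_dec : forall x y : Z * Z, {x = y} + {x <> y}.
Proof. decide equality; apply Z.eq_dec. Defined.

Lemma Eb_far f : bounded f -> exists M, forall b r, M <= Z.abs r -> Eb f b r = false.
Proof.
  intros [B HB]. exists (2*B+3). intros b r Hr. unfold Eb.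
  destruct (f ((r+1)/2, b)) eqn:E; auto.
  apply HB in E. cbn [fst snd] in E. exfalso. Z.div_mod_to_equations. lia.
Qed.

Lemma left_ex f : bounded f -> forall b s, exists r, lspec f b s r.
Proof.
  intros Hb b. destruct (Eb_far f Hb) as [M HM].
  assert (H : forall n s, Eb f b (s - 1 - Z.of_nat n) = false -> exists r, lspec f b s r).
  { induction n; intros s H.
    - exists (s-1). unfold lspec. replace (s - 1 - Z.of_nat 0) with (s-1) in H by lia.
      repeat split; auto; lia.
    - destruct (Eb f b (s-1)) eqn:E.
      + destruct (IHn (s-1)) as [r (H1 & H2 & H3)].
        { replace (s - 1 - 1 - Z.of_nat n) with (s - 1 - Z.of_nat (S n)) by lia; auto. }
        exists r. repeat split; auto; try lia. intros u Hu.
        destruct (Z.eq_dec u (s-1)); subst; auto. apply H3; lia.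
      + exists (s-1). repeat split; auto; lia. }
  intros s. apply (H (Z.to_nat (Z.abs s + M))). apply HM. lia.
Qed.

Lemma right_ex f : bounded f -> forall b s, exists r, s < r /\ Eb f b r = false /\
  forall u, s < u < r -> Eb f b u = true.
Proof.
  intros Hb b. destruct (Eb_far f Hb) as [M HM].
  assert (H : forall n s, Eb f b (s + 1 + Z.of_nat n) = false -> exists r, s < r /\ Eb f b r = false /\
  forall u, s < u < r -> Eb f b u = true).
  { induction n; intros s H.
    - exists (s+1). replace (s + 1 + Z.of_nat 0) with (s+1) in H by lia.
      repeat split; auto; lia.
    - destruct (Eb f b (s+1)) eqn:E.
      + destruct (IHn (s+1)) as [r (H1 & H2 & H3)].
        { replace (s + 1 + 1 + Z.of_nat n) with (s + 1 + Z.of_nat (S n)) by lia; auto. }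
        exists r. repeat split; auto; try lia. intros u Hu.
        destruct (Z.eq_dec u (s+1)); subst; auto. apply H3; lia.
      + exists (s+1). repeat split; auto; lia. }
  intros s. apply (H (Z.to_nat (Z.abs s + M))). apply HM. lia.
Qed.

Lemma lspec_uniq f b s r1 r2 : lspec f b s r1 -> lspec f b s r2 -> r1 = r2.
Proof.
  intros (A1 & B1 & C1) (A2 & B2 & C2).
  destruct (Z.lt_total r1 r2) as [H|[H|H]]; auto.
  - rewrite C1 in A2; [discriminate|lia].
  - rewrite C2 in A1; [discriminate|lia].
Qed.

Lemma sL_spec f b s : bounded f -> lspec f b s (sL f b s).
Proof. intros Hb. unfold sL. apply epsilon_spec. apply left_ex; auto. Qed.

Lemma ids0_in f P g : forall l x y, gpath P x l y -> In g (ids0 f x l) ->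
  exists l1 q1 q0 l2, l = l1 ++ q0 :: l2 /\ gpath P x l1 q1 /\ tri_adj q1 q0 /\
    gpath P q0 l2 y /\ In g (ids0step f q1 q0).
Proof.
  induction l as [|y1 l IH]; intros x y G Hin; simpl in Hin; [contradiction|].
  inversion G; subst.
  apply in_app_or in Hin as [Hin|Hin].
  - exists [], x, y1, l. repeat split; auto. constructor; auto.
  - destruct (IH y1 y H5 Hin) as (l1 & q1 & q0 & l2 & -> & G1 & A & G2 & Hi).
    exists (y1 :: l1), q1, q0, l2. repeat split; auto. constructor; auto.
Qed.

Lemma ids0step_len f p q : (length (ids0step f p q) <= 1)%nat.
Proof. unfold ids0step. destruct (cross0 p q) as [[b s]|]; simpl; lia. Qed.

Lemma A0 f : bounded f -> forall l x y, shortest_path (fun z => f z = true) x l y ->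
  forall g, (count_occ zz_dec (ids0 f x l) g <= 1)%nat.
Proof.
  intros Hb. induction l as [|y1 l IH]; intros x y Hs g; simpl; [lia|].
  pose proof (shortest_tail _ _ _ _ _ Hs) as Hs'.
  pose proof (IH _ _ Hs' g) as IHg.
  rewrite count_occ_app.
  destruct (count_occ zz_dec (ids0step f x y1) g) eqn:Ec; [lia|].
  assert (Hc1 : (count_occ zz_dec (ids0step f x y1) g <= 1)%nat).
  { pose proof (ids0step_len f x y1). pose proof (count_occ_bound zz_dec g (ids0step f x y1)). lia. }
  destruct (count_occ zz_dec (ids0 f y1 l) g) eqn:Er; [lia|]. exfalso.
  assert (Hin1 : In g (ids0step f x y1)) by (apply (count_occ_In zz_dec); lia).
  assert (Hin2 : In g (ids0 f y1 l)) by (apply (count_occ_In zz_dec); lia).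
  destruct Hs as [G M]. inversion G; subst.
  destruct (ids0_in f _ g l y1 y H5 Hin2) as (l1 & q1 & q0 & l2 & -> & G1 & A & G2 & Hi).
  unfold ids0step in Hin1, Hi.
  destruct (cross0 x y1) as [[b s]|] eqn:C1; [|contradiction].
  destruct (cross0 q1 q0) as [[b' s']|] eqn:C2; [|contradiction].
  destruct Hin1 as [<-|[]]. destruct Hi as [Hi|[]]. injection Hi as -> Hs.
  pose proof (gpath_ends _ _ _ _ G1) as [F1 F2].
  pose proof (gpath_ends _ _ _ _ G2) as [F3 F4].
  assert (E1 : Eb f b s = true) by (eapply Eb_true; [exact H1|exact F1|exact H3|exact C1]).
  assert (E2 : Eb f b s' = true) by (eapply Eb_true; [exact F2|exact F3|exact A|exact C2]).
  pose proof (sL_spec f b s Hb) as (S1 & S2 & S3).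
  pose proof (sL_spec f b s' Hb) as (T1 & T2 & T3).
  rewrite <- Hs in S1, S2, S3.
  assert (HE : forall u, Z.min s s' <= u <= Z.max s s' -> Eb f b u = true).
  { intros u Hu. destruct (Z.eq_dec u s); [subst; auto|].
    destruct (Z.eq_dec u s'); [subst; auto|].
    destruct (Z_lt_ge_dec u s); [apply S3; lia|apply T3; lia]. }
  pose proof (cross0_ends _ _ _ _ H3 C1) as X1.
  pose proof (cross0_ends _ _ _ _ A C2) as X2.
  destruct (ladder f b s s' x q0 HE) as (L & GL & HL).
  { destruct X1 as [[? ?]|[? ?]]; auto. }
  { destruct X2 as [[? ?]|[? ?]]; auto. }
  pose proof (geom b s s' x y1 q1 q0 X1 X2).
  pose proof (dT_lb _ _ _ _ G1).
  assert (GN : gpath (fun z => f z = true) x (L ++ l2) y) by (eapply gpath_app; eauto).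
  apply M in GN. rewrite length_app in GN. simpl in GN. rewrite length_app in GN. simpl in GN. lia.
Qed.

Fixpoint sumW (h : node -> node -> Z) (x : node) (l : list node) : Z :=
  match l with [] => 0 | y :: l' => h x y + sumW h y l' end.

Definition cU (b j : Z) (p q : node) : Z :=
  match cross0 p q with
  | Some (b', s) => if andb (b' =? b) (j <=? s) then (if snd q =? snd p + 1 then 1 else -1) else 0
  | None => 0 end.

Definition ind (b a : Z) (z : node) : Z := if andb (snd z =? b) (a <? fst z) then 1 else 0.

Lemma sumW_ext (f : node -> bool) h1 h2 x l y : gpath (fun z => f z = true) x l y ->
  (forall p q, f p = true -> f q = true -> tri_adj p q -> h1 p q = h2 p q) ->
  sumW h1 x l = sumW h2 x l.
Proof.
  intros G H; induction G; simpl; auto.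
  rewrite IHG. f_equal. apply H; auto. apply (gpath_ends _ _ _ _ G).
Qed.

Lemma sumW_lin h1 h2 h3 x l :
  sumW (fun p q => h1 p q - h2 p q + 2 * h3 p q) x l = sumW h1 x l - sumW h2 x l + 2 * sumW h3 x l.
Proof. revert x; induction l; intros x; cbn [sumW]; auto. rewrite IHl. lia. Qed.

Lemma sumW_sub h1 h2 x l :
  sumW (fun p q => h1 p q - h2 p q) x l = sumW h1 x l - sumW h2 x l.
Proof. revert x; induction l; intros x; cbn [sumW]; auto. rewrite IHl. lia. Qed.

Lemma sumW_tele (g : node -> Z) x l :
  sumW (fun p q => g q - g p) x l = g (last l x) - g x.
Proof. revert x; induction l; intros x; cbn [sumW]; [simpl; lia|]. rewrite IHl, last_cons. lia. Qed.

Lemma cU_step (f : node -> bool) b j p q m : f p = true -> f q = true -> tri_adj p q ->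
  f m = false -> (lowerE b j m \/ upperE b j m) -> cU b j p q = cU b (j+1) p q.
Proof.
  destruct p as [p1 p2], q as [q1 q2], m as [m1 m2]. intros Fp Fq H Fm Hm.
  unfold cU, cross0, lowerE, upperE in *; cbn [fst snd] in *.
  dadj H; zdestr; try lia;
  destruct Hm as [[? ?]|[? ?]]; try lia;
  first [ assert (E : (p1,p2) = (m1,m2)) by (f_equal; lia); congruence
        | assert (E : (q1,q2) = (m1,m2)) by (f_equal; lia); congruence ].
Qed.

Lemma flux_step (f : node -> bool) b a p q : f p = true -> f q = true -> tri_adj p q ->
  f (a, b) = false ->
  ind b a q - ind b a p = cU (b-1) (2*a+2) p q - cU b (2*a+1) p q.
Proof.
  destruct p as [p1 p2], q as [q1 q2]. intros Fp Fq H Fm.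
  unfold cU, cross0, ind in *; cbn [fst snd] in *.
  dadj H; zdestr; try lia;
  first [ assert (E : (p1,p2) = (a,b)) by (f_equal; lia); congruence
        | assert (E : (q1,q2) = (a,b)) by (f_equal; lia); congruence ].
Qed.

Definition tri (m : node) (b0 j : Z) : Prop :=
  (b0 = snd m /\ 2 * fst m - 1 <= j <= 2 * fst m + 1) \/
  (b0 = snd m - 1 /\ 2 * fst m <= j <= 2 * fst m + 2).

Definition wv x l (m : node) := sumW (cU (snd m) (2 * fst m)) x l.

Lemma Ustep f x l b j m : gpath (fun z => f z = true) x l x -> f m = false ->
  (lowerE b j m \/ upperE b j m) -> sumW (cU b j) x l = sumW (cU b (j+1)) x l.
Proof.
  intros G Fm Hm. eapply sumW_ext; [exact G|]. intros p q Fp Fq A.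
  eapply cU_step; eauto.
Qed.

Lemma six f x l m b0 j : gpath (fun z => f z = true) x l x -> f m = false ->
  tri m b0 j -> sumW (cU b0 j) x l = wv x l m.
Proof.
  intros G Fm Ht. destruct m as [a b]. unfold wv, tri in *; cbn [fst snd] in *.
  assert (e1 : sumW (cU b (2*a-1)) x l = sumW (cU b (2*a)) x l).
  { replace (2*a) with (2*a-1+1) at 2 by lia. eapply Ustep; eauto.
    left; unfold lowerE; cbn [fst snd]; lia. }
  assert (e2 : sumW (cU b (2*a)) x l = sumW (cU b (2*a+1)) x l).
  { eapply Ustep; eauto. left; unfold lowerE; cbn [fst snd]; lia. }
  assert (e3 : sumW (cU (b-1) (2*a)) x l = sumW (cU (b-1) (2*a+1)) x l).
  { eapply Ustep; eauto. right; unfold upperE; cbn [fst snd]; lia. }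
  assert (e4 : sumW (cU (b-1) (2*a+1)) x l = sumW (cU (b-1) (2*a+2)) x l).
  { replace (2*a+2) with (2*a+1+1) by lia. eapply Ustep; eauto.
    right; unfold upperE; cbn [fst snd]; lia. }
  assert (e5 : sumW (cU b (2*a+1)) x l = sumW (cU (b-1) (2*a+2)) x l).
  { assert (T : sumW (fun p q => ind b a q - ind b a p) x l = 0).
    { rewrite sumW_tele. rewrite (gpath_last _ _ _ _ G). lia. }
    rewrite (sumW_ext f _ (fun p q => cU (b-1) (2*a+2) p q - cU b (2*a+1) p q) x l x G) in T.
    - rewrite sumW_sub in T. lia.
    - intros p q Fp Fq A. eapply flux_step; eauto. }
  destruct Ht as [[-> Hj]|[-> Hj]].
  - assert (Hj' : j = 2*a-1 \/ j = 2*a \/ j = 2*a+1) by lia; destruct Hj' as [ -> | [ -> | -> ] ]; congruence.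
  - assert (Hj' : j = 2*a \/ j = 2*a+1 \/ j = 2*a+2) by lia; destruct Hj' as [ -> | [ -> | -> ] ]; congruence.
Qed.

Lemma wv_adj f x l m m' : gpath (fun z => f z = true) x l x -> f m = false -> f m' = false ->
  tri_adj m m' -> wv x l m = wv x l m'.
Proof.
  intros G F1 F2 A.
  assert (exists b0 j, tri m b0 j /\ tri m' b0 j) as (b0 & j & T1 & T2).
  { destruct m as [a b], m' as [a' b']. unfold tri; cbn [fst snd]. dadj A.
    - exists b, (2*a+1). lia.
    - exists b, (2*a-1). lia.
    - exists b, (2*a). lia.
    - exists (b-1), (2*a). lia.
    - exists (b-1), (2*a+1). lia.
    - exists b, (2*a-1). lia. }
  rewrite <- (six f x l m b0 j), <- (six f x l m' b0 j); auto.
Qed.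

Lemma wv_path f x l m l' m' : gpath (fun z => f z = true) x l x ->
  gpath (fun z => f z = false) m l' m' -> wv x l m = wv x l m'.
Proof.
  intros G P; induction P; auto. rewrite <- IHP. eapply wv_adj; eauto.
  apply (gpath_ends _ _ _ _ P).
Qed.

Lemma ends f b r : Eb f b r = false -> exists m, f m = false /\ tri m b (r+1) /\ tri m b r.
Proof.
  intros H. destruct (Eb_false f b r H) as (m & Fm & Hm). exists m; split; auto.
  unfold tri, lowerE, upperE in *. destruct Hm as [[? ?]|[? ?]]; lia.
Qed.

Definition dn (b lo hi : Z) (p q : node) : Z :=
  match cross0 p q with
  | Some (b', s) => if andb (andb (b' =? b) (lo <=? s)) (andb (s <? hi) (snd p =? snd q + 1)) then 1 else 0
  | None => 0 end.

Lemma cross0_some p q b s : cross0 p q = Some (b, s) ->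
  ((snd q = snd p + 1 /\ b = snd p) \/ (snd p = snd q + 1 /\ b = snd q)) /\ s = fst p + fst q.
Proof.
  unfold cross0. zdestr; intros H; try discriminate; injection H; intros; subst; lia.
Qed.

Lemma sL_char f b s r sR : bounded f -> Eb f b s = true -> Eb f b r = false -> Eb f b sR = false ->
  r < sR -> (forall u, r < u < sR -> Eb f b u = true) -> (sL f b s = r <-> r < s < sR).
Proof.
  intros Hb Es Er ER Hr Hu. pose proof (sL_spec f b s Hb) as Sp. split.
  - intros Heq. rewrite Heq in Sp. destruct Sp as (S1 & S2 & S3). split; auto.
    destruct (Z_lt_ge_dec s sR); auto. destruct (Z.eq_dec s sR); [subst; congruence|].
    rewrite S3 in ER; [discriminate|lia].
  - intros Hs. apply (lspec_uniq f b s); auto. repeat split; auto; try lia.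
    intros u Hu'. apply Hu; lia.
Qed.

Lemma count_sumW f g x l :
  Z.of_nat (count_occ zz_dec (ids0 f x l) g) =
  sumW (fun p q => Z.of_nat (count_occ zz_dec (ids0step f p q) g)) x l.
Proof. revert x; induction l; intros x; cbn [ids0 sumW]; auto. rewrite count_occ_app, <- IHl. lia. Qed.

Lemma K0 f : bounded f ->
  (forall m m', f m = false -> f m' = false -> exists l, gpath (fun z => f z = false) m l m') ->
  forall x l, gpath (fun z => f z = true) x l x ->
  forall g, exists k, count_occ zz_dec (ids0 f x l) g = (2 * k)%nat.
Proof.
  intros Hb Hc x l G g.
  destruct (count_occ zz_dec (ids0 f x l) g) eqn:Ec; [exists 0%nat; auto|].
  assert (Hin : In g (ids0 f x l)) by (apply (count_occ_In zz_dec); lia).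
  destruct (ids0_in f _ g l x x G Hin) as (l1 & q1 & q0 & l2 & Hl & G1 & A & G2 & Hi).
  pose proof (gpath_ends _ _ _ _ G1) as [_ F1]. pose proof (gpath_ends _ _ _ _ G2) as [F2 _].
  unfold ids0step in Hi. destruct (cross0 q1 q0) as [[b s0]|] eqn:C; [|contradiction].
  destruct Hi as [<-|[]].
  assert (E0 : Eb f b s0 = true) by (eapply Eb_true; [exact F1|exact F2|exact A|exact C]).
  set (r := sL f b s0).
  pose proof (sL_spec f b s0 Hb) as (S1 & S2 & S3). fold r in S1, S2, S3.
  destruct (right_ex f Hb b s0) as (sR & R1 & R2 & R3).
  assert (Hall : forall u, r < u < sR -> Eb f b u = true).
  { intros u Hu. destruct (Z_lt_ge_dec u s0); [apply S3; lia|].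
    destruct (Z.eq_dec u s0); [subst; auto|apply R3; lia]. }
  assert (Hstep : forall p q, f p = true -> f q = true -> tri_adj p q ->
     Z.of_nat (count_occ zz_dec (ids0step f p q) (b, r)) =
     cU b (r+1) p q - cU b sR p q + 2 * dn b (r+1) sR p q).
  { intros p q Fp Fq Apq. unfold ids0step, cU, dn.
    destruct (cross0 p q) as [[b' s]|] eqn:Cpq; [|reflexivity].
    pose proof (Eb_true f p q b' s Fp Fq Apq Cpq) as Es.
    pose proof (cross0_some _ _ _ _ Cpq) as [Hd Hs].
    cbn [count_occ]. destruct (zz_dec (b', sL f b' s) (b, r)) as [e|ne].
    - injection e as -> e.
      apply (sL_char f b s r sR Hb Es S1 R2 ltac:(lia) Hall) in e.
      zdestr; lia.
    - destruct (Z.eq_dec b' b) as [->|nb].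
      + assert (~ (r < s < sR)).
        { intros Hr. apply ne. f_equal. apply (sL_char f b s r sR Hb Es S1 R2 ltac:(lia) Hall); auto. }
        zdestr; lia.
      + zdestr; lia. }
  assert (Z.of_nat (S n) = 2 * sumW (dn b (r+1) sR) x l).
  { rewrite <- Ec, count_sumW.
    rewrite (sumW_ext f _ (fun p q => cU b (r+1) p q - cU b sR p q + 2 * dn b (r+1) sR p q) x l x G).
    2: { intros; apply Hstep; auto. }
    rewrite sumW_lin.
    destruct (ends f b r S1) as (mL & FL & TL & _).
    destruct (ends f b sR R2) as (mR & FR & _ & TR).
    rewrite (six f x l mL b (r+1)), (six f x l mR b sR); auto.
    destruct (Hc mL mR FL FR) as [lc Gc].
    rewrite (wv_path f x l mL lc mR); auto. lia. }
  exists (Z.to_nat (sumW (dn b (r+1) sR) x l)). lia.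
Qed.

Definition rot (p : node) : node := (- snd p, fst p + snd p).
Definition roti (p : node) : node := (fst p + snd p, - fst p).

Lemma rot_roti z : rot (roti z) = z.
Proof. destruct z; unfold rot, roti; cbn [fst snd]; f_equal; lia. Qed.
Lemma roti_rot z : roti (rot z) = z.
Proof. destruct z; unfold rot, roti; cbn [fst snd]; f_equal; lia. Qed.
Lemma rot_adj p q : tri_adj p q -> tri_adj (rot p) (rot q).
Proof. destruct p, q; unfold rot, tri_adj; cbn [fst snd]; lia. Qed.
Lemma roti_adj p q : tri_adj p q -> tri_adj (roti p) (roti q).
Proof. destruct p, q; unfold roti, tri_adj; cbn [fst snd]; lia. Qed.

Definition ccon (f : node -> bool) := forall m m', f m = false -> f m' = false ->
  exists l, gpath (fun z => f z = false) m l m'.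

Lemma bounded_rot f : bounded f -> bounded (fun z => f (roti z)).
Proof.
  intros [B HB]. exists (2*B). intros z Hz. apply HB in Hz.
  destruct z; unfold roti in Hz; cbn [fst snd] in *. lia.
Qed.

Lemma ccon_rot f : ccon f -> ccon (fun z => f (roti z)).
Proof.
  intros H m m' F1 F2. destruct (H _ _ F1 F2) as [l G].
  exists (map rot l). rewrite <- (rot_roti m), <- (rot_roti m').
  eapply gpath_map; [apply rot_adj| |exact G]. intros z Hz. rewrite roti_rot; auto.
Qed.

Lemma gpath_rot f x l y : gpath (fun z => f z = true) x l y ->
  gpath (fun z => f (roti z) = true) (rot x) (map rot l) (rot y).
Proof.
  intros G. eapply gpath_map; [apply rot_adj| |exact G]. intros z Hz. rewrite roti_rot; auto.
Qed.

Lemma shortest_rot f x l y : shortest_path (fun z => f z = true) x l y ->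
  shortest_path (fun z => f (roti z) = true) (rot x) (map rot l) (rot y).
Proof.
  intros [G M]. split; [apply gpath_rot; auto|].
  intros l' G'. rewrite length_map. rewrite <- (length_map roti l'). apply M.
  rewrite <- (roti_rot x), <- (roti_rot y).
  eapply gpath_map; [apply roti_adj| |exact G']. auto.
Qed.

Definition node_dec : forall x y : node, {x = y} + {x <> y}.
Proof. decide equality; apply Z.eq_dec. Defined.

Definition f0 (vs : list node) (z : node) : bool := if in_dec node_dec z vs then true else false.
Definition f1 vs z := f0 vs (roti z).
Definition f2 vs z := f1 vs (roti z).

Lemma f0_iff vs z : f0 vs z = true <-> In z vs.
Proof. unfold f0; destruct (in_dec node_dec z vs); split; auto; discriminate. Qed.
Lemma f0_false vs z : f0 vs z = false <-> ~ In z vs.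
Proof. unfold f0; destruct (in_dec node_dec z vs); split; auto; try discriminate; tauto. Qed.

Lemma bounded_f0 vs : bounded (f0 vs).
Proof.
  exists (fold_right (fun p acc => Z.abs (fst p) + Z.abs (snd p) + acc) 0 vs).
  intros z Hz. apply f0_iff in Hz. induction vs as [|p vs IH]; [contradiction|].
  cbn [fold_right]. assert (0 <= fold_right (fun p acc => Z.abs (fst p) + Z.abs (snd p) + acc) 0 vs).
  { clear. induction vs; cbn [fold_right]; lia. }
  destruct Hz as [<-|Hz]; [lia|]. specialize (IH Hz). lia.
Qed.

Definition pdec : forall x y : nat * (Z * Z), {x = y} + {x <> y}.
Proof. decide equality; [apply zz_dec|apply Nat.eq_dec]. Defined.

Definition inc vs x l :=
  map (pair 0%nat) (ids0 (f0 vs) x l) ++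
  map (pair 1%nat) (ids0 (f1 vs) (rot x) (map rot l)) ++
  map (pair 2%nat) (ids0 (f2 vs) (rot (rot x)) (map rot (map rot l))).

Lemma cnt_map_pair k L k' g :
  count_occ pdec (map (pair k) L) (k', g) = if Nat.eq_dec k k' then count_occ zz_dec L g else 0%nat.
Proof.
  induction L as [|a L IH]; simpl; [destruct (Nat.eq_dec k k'); auto|].
  destruct (pdec (k, a) (k', g)) as [e|e]; destruct (zz_dec a g) as [e'|e'];
  destruct (Nat.eq_dec k k'); subst; try congruence; rewrite IH; auto;
  destruct (Nat.eq_dec k' k'); try congruence; auto.
Qed.

Lemma ccon_f0 vs : simple_grid vs -> ccon (f0 vs).
Proof.
  intros H m m' F1 F2. apply f0_false in F1, F2. destruct (H _ _ F1 F2) as [l G].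
  exists l. eapply gpath_mono; [|exact G]. intros z Hz; apply f0_false; auto.
Qed.

Lemma to_f0 vs x l y : gpath (fun z => In z vs) x l y -> gpath (fun z => f0 vs z = true) x l y.
Proof. apply gpath_mono. intros z; apply f0_iff. Qed.

Lemma F1 vs x l y : shortest_path (fun z => In z vs) x l y ->
  forall g, (count_occ pdec (inc vs x l) g <= 1)%nat.
Proof.
  intros Hs [k g].
  assert (S0 : shortest_path (fun z => f0 vs z = true) x l y).
  { eapply shortest_mono; [|exact Hs]. intros z; symmetry; apply f0_iff. }
  pose proof (shortest_rot _ _ _ _ S0) as S1.
  pose proof (shortest_rot _ _ _ _ S1) as S2.
  pose proof (bounded_f0 vs) as B0.
  pose proof (bounded_rot _ B0) as B1. pose proof (bounded_rot _ B1) as B2.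
  pose proof (A0 _ B0 _ _ _ S0 g). pose proof (A0 _ B1 _ _ _ S1 g). pose proof (A0 _ B2 _ _ _ S2 g).
  unfold inc, f2, f1 in *; cbv beta in *. rewrite !count_occ_app, !cnt_map_pair.
  destruct (Nat.eq_dec 0 k), (Nat.eq_dec 1 k), (Nat.eq_dec 2 k); subst; try lia.
Qed.

Lemma F2 vs : simple_grid vs -> forall x l, gpath (fun z => In z vs) x l x ->
  forall g, exists k, count_occ pdec (inc vs x l) g = (2 * k)%nat.
Proof.
  intros Hs x l G [k g].
  pose proof (to_f0 _ _ _ _ G) as G0.
  pose proof (gpath_rot _ _ _ _ G0) as G1.
  pose proof (gpath_rot _ _ _ _ G1) as G2.
  pose proof (bounded_f0 vs) as B0.
  pose proof (bounded_rot _ B0) as B1. pose proof (bounded_rot _ B1) as B2.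
  pose proof (ccon_f0 _ Hs) as C0. pose proof (ccon_rot _ C0) as C1. pose proof (ccon_rot _ C1) as C2.
  destruct (K0 _ B0 C0 _ _ G0 g) as [k0 H0].
  destruct (K0 _ B1 C1 _ _ G1 g) as [k1 H1].
  destruct (K0 _ B2 C2 _ _ G2 g) as [k2 H2].
  unfold inc, f2, f1 in *; cbv beta in *. rewrite !count_occ_app, !cnt_map_pair.
  destruct (Nat.eq_dec 0 k), (Nat.eq_dec 1 k), (Nat.eq_dec 2 k); subst; try lia;
  [exists k0|exists k1|exists k2|exists 0%nat]; lia.
Qed.

Lemma ids0_app f x l1 l2 : ids0 f x (l1 ++ l2) = ids0 f x l1 ++ ids0 f (last l1 x) l2.
Proof.
  revert x; induction l1 as [|a l1 IH]; intros x; cbn [app ids0]; auto.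
  rewrite IH, app_assoc, last_cons; auto.
Qed.

Lemma last_map (h : node -> node) l x : last (map h l) (h x) = h (last l x).
Proof. revert x; induction l; intros x; [reflexivity|]. cbn [map]. rewrite !last_cons. apply IHl. Qed.

Lemma F3 vs x l1 m l2 g : gpath (fun z => In z vs) x l1 m ->
  count_occ pdec (inc vs x (l1 ++ l2)) g = (count_occ pdec (inc vs x l1) g + count_occ pdec (inc vs m l2) g)%nat.
Proof.
  intros G. pose proof (gpath_last _ _ _ _ G) as HL.
  unfold inc. rewrite !map_app, !ids0_app, !last_map, HL, !map_app, !count_occ_app. lia.
Qed.

Definition c0 (p q : node) : nat := match cross0 p q with Some _ => 1%nat | None => 0%nat end.

Lemma c0_sum p q : tri_adj p q -> (c0 p q + c0 (rot p) (rot q) + c0 (rot (rot p)) (rot (rot q)) = 2)%nat.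
Proof. destruct p, q; intros H; unfold c0, cross0, rot; cbn [fst snd]; dadj H; zdestr; lia. Qed.

Lemma F4 vs x l y : gpath (fun z => In z vs) x l y -> length (inc vs x l) = (2 * length l)%nat.
Proof.
  intros G. induction G; [reflexivity|].
  unfold inc in *. cbn [map ids0]. rewrite !length_app, !length_map, !length_app in *.
  assert (forall f p q, length (ids0step f p q) = c0 p q).
  { intros f p q; unfold ids0step, c0; destruct (cross0 p q) as [[? ?]|]; auto. }
  rewrite !H1. pose proof (c0_sum x y H0). cbn [length]. lia.
Qed.
Close Scope Z_scope.

Lemma PAR vs : tri_grid_graph vs -> simple_grid vs -> forall a A B b g,
  gpath (fun z => In z vs) a A b -> gpath (fun z => In z vs) a B b ->
  exists k, (count_occ pdec (inc vs a A) g + count_occ pdec (inc vs a B) g = 2 * k)%nat.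
Proof.
  intros Hc Hs a A B b g GA GB.
  destruct (gpath_ends _ _ _ _ GA) as [Ha Hb].
  destruct (Hc b a Hb Ha) as [C GC].
  destruct (F2 vs Hs a (A ++ C) (gpath_app _ _ _ _ _ _ GA GC) g) as [k1 H1].
  destruct (F2 vs Hs a (B ++ C) (gpath_app _ _ _ _ _ _ GB GC) g) as [k2 H2].
  rewrite (F3 vs a A b C g GA) in H1. rewrite (F3 vs a B b C g GB) in H2.
  exists (k1 + k2 - count_occ pdec (inc vs b C) g)%nat. lia.
Qed.

Theorem mainTheorem1 (vs : list node) (u v : node) :
  tri_grid_graph vs -> simple_grid vs -> In u vs -> In v vs ->
  forall x y, on_shortest vs u v x -> on_shortest vs u v y ->
  forall l, shortest_path (fun z => In z vs) x l y ->
  forall z, In z (x :: l) -> on_shortest vs u v z.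
Proof.
  intros Hc Hs Hu Hv x y [A [SA HxA]] [Bp [SB HyB]] l Sl z Hz.
  destruct SA as [GA MA]. destruct SB as [GB MB]. destruct Sl as [Gl Ml].
  destruct (gpath_split _ _ _ _ _ GA HxA) as (A1 & A2 & EA & GA1 & GA2).
  destruct (gpath_split _ _ _ _ _ GB HyB) as (B1 & B2 & EB & GB1 & GB2).
  destruct (gpath_split _ _ _ _ _ Gl Hz) as (l1 & l2 & El & Gl1 & Gl2).
  assert (SA : shortest_path (fun z => In z vs) u A v) by (split; auto).
  assert (SB : shortest_path (fun z => In z vs) u Bp v) by (split; auto).
  assert (Sl : shortest_path (fun z => In z vs) x l y) by (split; auto).
  destruct (gpath_ends _ _ _ _ Gl1) as [_ Hzv].
  destruct (shortest_exists _ u z (Hc u z Hu Hzv)) as [P1 SP1].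
  destruct (shortest_exists _ z v (Hc z v Hzv Hv)) as [P2 SP2].
  pose proof SP1 as [GP1 _]. pose proof SP2 as [GP2 _].
  exists (P1 ++ P2). split.
  2: { pose proof (gpath_in_last _ _ _ _ GP1) as H. simpl in H |- *.
       destruct H as [H|H]; auto. right. apply in_or_app; auto. }
  assert (GL : gpath (fun z => In z vs) u (P1 ++ P2) v) by (eapply gpath_app; eauto).
  split; auto. intros R GR.
  set (c := fun a L g => count_occ pdec (inc vs a L) g).
  assert (C1 : forall g, (c u (P1 ++ P2) g <= 1)%nat).
  { intros g. unfold c. rewrite (F3 vs u P1 z P2 g GP1).
    pose proof (F1 _ _ _ _ SP1 g). pose proof (F1 _ _ _ _ SP2 g).
    pose proof (F1 _ _ _ _ SA g) as HA. rewrite EA, (F3 vs u A1 x A2 g GA1) in HA.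
    pose proof (F1 _ _ _ _ SB g) as HB. rewrite EB, (F3 vs u B1 y B2 g GB1) in HB.
    pose proof (F1 _ _ _ _ Sl g) as HL. rewrite El, (F3 vs x l1 z l2 g Gl1) in HL.
    destruct (PAR vs Hc Hs u (P1 ++ P2) (A1 ++ A2) v g GL ltac:(rewrite <- EA; auto)) as [k1 K1].
    rewrite (F3 vs u P1 z P2 g GP1), (F3 vs u A1 x A2 g GA1) in K1.
    destruct (PAR vs Hc Hs u (P1 ++ P2) (B1 ++ B2) v g GL ltac:(rewrite <- EB; auto)) as [k4 K4].
    rewrite (F3 vs u P1 z P2 g GP1), (F3 vs u B1 y B2 g GB1) in K4.
    destruct (PAR vs Hc Hs u (A1 ++ l1) P1 z g (gpath_app _ _ _ _ _ _ GA1 Gl1) GP1) as [k2 K2].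
    rewrite (F3 vs u A1 x l1 g GA1) in K2.
    destruct (PAR vs Hc Hs u (P1 ++ l2) B1 y g (gpath_app _ _ _ _ _ _ GP1 Gl2) GB1) as [k3 K3].
    rewrite (F3 vs u P1 z l2 g GP1) in K3.
    lia. }
  assert (ND : NoDup (inc vs u (P1 ++ P2))) by (apply (NoDup_count_occ pdec); exact C1).
  assert (IN : incl (inc vs u (P1 ++ P2)) (inc vs u R)).
  { intros g Hg. apply (count_occ_In pdec) in Hg. apply (count_occ_In pdec).
    pose proof (C1 g). unfold c in *.
    destruct (PAR vs Hc Hs u (P1 ++ P2) R v g GL GR) as [k K]. lia. }
  pose proof (NoDup_incl_length ND IN) as HLn.
  rewrite (F4 _ _ _ _ GL), (F4 _ _ _ _ GR) in HLn. lia.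
Qed.
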